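(* Let $F$ be a continuous, strictly increasing CDF on $[0,1]$ and $v\in[0,1]$, and suppose Assumption 2 holds with constants $\Delta>0$, $0<c_f<C_f$, $\lambda>0$. Let $W_{v,F}(q)=U_{v,F}(F^{-1}(q))$ and $q^*_{v,F}=F(b^*_{v,F})$. Then for every $q\in[q^*_{v,F},\,q^*_{v,F}+C_f\Delta]$ (with $F^{-1}(q)\in[b^*_{v,F},b^*_{v,F}+\Delta]$), $$W_{v,F}(q^*_{v,F})-W_{v,F}(q)\ \le\ \frac{\lambda}{c_f}\,(q^*_{v,F}-q)^2.$$
   Context: $U_{v,F}(b)=(v-b)F(b)$, $b^*_{v,F}=\max\{\operatorname{argmax}_{b\in[0,1]}U_{v,F}(b)\}$. Assumption 2 (constants $\Delta>0$, $c_f,C_f,\lambda$): $F$ admits a density $f$ with $c_f<f(b)<C_f$ for all $b\in[b^*_{v,F}-\Delta,b^*_{v,F}+\Delta]$, and $\phi_F:b\mapsto b+F(b)/f(b)$ is differentiable with $\phi_F'(b)\le\lambda$ on $[b^*_{v,F},b^*_{v,F}+\Delta]$. *)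

(* Defs.v *)
From Stdlib Require Import Reals.
From Coquelicot Require Import Coquelicot.
Open Scope R_scope.

Definition U (v : R) (F : R -> R) (b : R) : R := (v - b) * F b.

Definition cont_strict_cdf01 (F : R -> R) : Prop :=
  (forall x, x <= 0 -> F x = 0) /\
  (forall x, 1 <= x -> F x = 1) /\
  (forall x, continuity_pt F x) /\
  (forall x y, 0 <= x -> x < y -> y <= 1 -> F x < F y).

Definition is_bstar (v : R) (F : R -> R) (bs : R) : Prop :=
  (0 <= bs <= 1) /\
  (forall b, 0 <= b <= 1 -> U v F b <= U v F bs) /\
  (forall b, 0 <= b <= 1 -> U v F b = U v F bs -> b <= bs).

(* g has derivative d at x, relative to the domain [0,1] (the support of F) *)
Definition deriv01 (g : R -> R) (x d : R) : Prop :=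
  forall eps, 0 < eps -> exists delta, 0 < delta /\
    forall y, 0 <= y <= 1 -> Rabs (y - x) < delta ->
      Rabs (g y - g x - d * (y - x)) <= eps * Rabs (y - x).

Definition phi (F f : R -> R) (b : R) : R := b + F b / f b.

Definition assumption2 (v : R) (F f : R -> R) (bs Delta cf Cf lam : R) : Prop :=
  (forall b, bs - Delta <= b <= bs + Delta -> 0 <= b <= 1 ->
       deriv01 F b (f b) /\ cf < f b < Cf) /\
  (forall b, bs <= b <= bs + Delta -> 0 <= b <= 1 ->
       exists d, deriv01 (phi F f) b d /\ d <= lam).

Definition Finv (F : R -> R) (q : R) : R :=
  real (Glb_Rbar (fun b => 0 <= b <= 1 /\ q <= F b)).

Definition W (v : R) (F : R -> R) (q : R) : R := U v F (Finv F q).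

(* Main.v *)
Require Import Defs.
From Stdlib Require Import Reals Lra Classical.
From Coquelicot Require Import Coquelicot.
Open Scope R_scope.

Lemma d01_b (g : R -> R) x d eps : deriv01 g x d -> 0 < eps ->
  exists delta, 0 < delta /\ forall y, 0 <= y <= 1 -> Rabs (y - x) < delta ->
   g x + d * (y - x) - eps * Rabs (y - x) <= g y <= g x + d * (y - x) + eps * Rabs (y - x).
Proof.
  intros H He. destruct (H eps He) as [dl [Hd Hy]]. exists dl; split; auto.
  intros y Hy1 Hy2. specialize (Hy y Hy1 Hy2). apply Rabs_le_between in Hy. lra.
Qed.

Lemma mono_up_eps (g : R -> R) M a c eps : 0 <= a -> a <= c -> c <= 1 -> 0 < eps ->
  (forall x, a <= x <= c -> exists dx, deriv01 g x dx /\ dx <= M) ->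
  g c - g a <= (M + eps) * (c - a).
Proof.
  intros Ha Hac Hc He Hd.
  set (E := fun x => a <= x <= c /\ g x - g a <= (M + eps) * (x - a)).
  assert (Hb : bound E). { exists c. intros x [Hx _]. lra. }
  assert (Hn : exists x, E x). { exists a. split. lra. lra. }
  destruct (completeness E Hb Hn) as [s [Hub Hlub]].
  assert (Has : a <= s). { apply Hub. split; lra. }
  assert (Hsc : s <= c). { apply Hlub. intros x [Hx _]; lra. }
  destruct (Hd s (conj Has Hsc)) as [ds [Hds HdM]].
  destruct (d01_b g s ds eps Hds He) as [dl [Hdl Hy]].
  assert (Es : E s).
  { destruct (Req_dec s a) as [->|Hne].
    - split; lra.
    - set (dl' := Rmin dl (s - a)).
      assert (Hdl' : 0 < dl'). { unfold dl'. apply Rmin_glb_lt; lra. }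
      assert (Hex : exists x, E x /\ s - dl' < x).
      { apply NNPP. intro Hno.
        assert (s <= s - dl').
        { apply Hlub. intros x Ex. apply Rnot_lt_le. intro Hlt. apply Hno. exists x; auto. }
        lra. }
      destruct Hex as [x [[Hx1 Hx2] Hx3]].
      assert (x <= s) by (apply Hub; split; auto).
      assert (dl' <= dl) by apply Rmin_l.
      assert (Hyx := Hy x ltac:(lra) ltac:(rewrite Rabs_left1; lra)).
      rewrite Rabs_left1 in Hyx by lra.
      split. lra.
      assert (ds * (x - s) >= M * (x - s)) by nra.
      nra. }
  destruct (Rle_lt_or_eq_dec s c Hsc) as [Hlt|Heq].
  - exfalso.
    set (y := s + Rmin dl (c - s) / 2).
    assert (Hm : 0 < Rmin dl (c - s)) by (apply Rmin_glb_lt; lra).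
    assert (Hm1 := Rmin_l dl (c - s)). assert (Hm2 := Rmin_r dl (c - s)).
    assert (Hys := Hy y ltac:(unfold y; lra) ltac:(unfold y; rewrite Rabs_right; lra)).
    rewrite Rabs_right in Hys by (unfold y; lra).
    assert (Ey : E y).
    { destruct Es as [_ Es]. split. unfold y; lra.
      assert (ds * (y - s) <= M * (y - s)) by (unfold y in *; nra).
      nra. }
    assert (y <= s) by (apply Hub; auto). unfold y in *. lra.
  - subst s. destruct Es; lra.
Qed.

Lemma mono_up (g : R -> R) M a c : 0 <= a -> a <= c -> c <= 1 ->
  (forall x, a <= x <= c -> exists dx, deriv01 g x dx /\ dx <= M) ->
  g c - g a <= M * (c - a).
Proof.
  intros Ha Hac Hc Hd.
  destruct (Req_dec a c) as [->|Hne]. lra.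
  apply Rnot_lt_le. intro Hlt.
  set (eps := (g c - g a - M * (c - a)) / (2 * (c - a))).
  assert (He : 0 < eps). { unfold eps. apply Rdiv_lt_0_compat; lra. }
  assert (H := mono_up_eps g M a c eps Ha Hac Hc He Hd).
  assert (eps * (c - a) = (g c - g a - M * (c - a)) / 2) by (unfold eps; field; lra).
  nra.
Qed.


Lemma d01_is_derive (g : R -> R) x d : 0 < x < 1 -> deriv01 g x d -> is_derive g x d.
Proof.
  intros Hx H. apply is_derive_Reals. intros eps He.
  destruct (H (eps / 2) ltac:(lra)) as [dl [Hdl Hy]].
  assert (Hp : 0 < Rmin dl (Rmin x (1 - x))).
  { apply Rmin_glb_lt; auto. apply Rmin_glb_lt; lra. }
  exists (mkposreal _ Hp). intros h Hh0 Hh. simpl in Hh.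
  assert (H1 := Rmin_l dl (Rmin x (1 - x))).
  assert (H2 := Rmin_r dl (Rmin x (1 - x))).
  assert (H3 := Rmin_l x (1 - x)). assert (H4 := Rmin_r x (1 - x)).
  apply Rabs_lt_between in Hh.
  assert (Hyy := Hy (x + h) ltac:(lra) ltac:(replace (x + h - x) with h by ring; apply Rabs_lt_between; lra)).
  replace (x + h - x) with h in Hyy by ring.
  replace ((g (x + h) - g x) / h - d) with ((g (x + h) - g x - d * h) / h) by (field; auto).
  rewrite Rabs_div by auto.
  assert (0 < Rabs h) by (apply Rabs_pos_lt; auto).
  apply (Rmult_lt_reg_r (Rabs h)); auto.
  unfold Rdiv. rewrite Rmult_assoc, Rinv_l by lra. nra.
Qed.

Lemma Finv_range F q : cont_strict_cdf01 F -> q <= 1 -> 0 <= Finv F q <= 1.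
Proof.
  intros [H0 [H1 [Hc Hm]]] Hq. unfold Finv.
  destruct (Glb_Rbar_correct (fun b => 0 <= b <= 1 /\ q <= F b)) as [Hlb Hg].
  assert (A := Hlb 1 ltac:(split; [lra| rewrite H1; lra])).
  assert (B := Hg (Finite 0) ltac:(intros x [Hx _]; simpl; lra)).
  destruct (Glb_Rbar _) as [r| |]; simpl in *; try contradiction. lra.
Qed.

Lemma Finv_le F q : cont_strict_cdf01 F -> 0 <= q -> q <= 1 -> F (Finv F q) <= q.
Proof.
  intros HF Hq0 Hq. assert (Hr := Finv_range F q HF Hq).
  destruct HF as [H0 [H1 [Hc Hm]]]. revert Hr. unfold Finv.
  destruct (Glb_Rbar_correct (fun b => 0 <= b <= 1 /\ q <= F b)) as [Hlb Hg].
  destruct (Glb_Rbar _) as [b| |]; simpl; try (intros; rewrite H0; lra).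
  intros Hb.
  destruct (Req_dec b 0) as [->|Hb0]. rewrite H0; lra.
  apply Rnot_lt_le. intro Hlt.
  assert (Hcb := Hc b). unfold continuity_pt, continue_in, limit1_in, limit_in in Hcb.
  destruct (Hcb (F b - q) ltac:(lra)) as [al [Hal Hy]].
  set (y := b - Rmin al b / 2).
  assert (Hm0 : 0 < Rmin al b) by (apply Rmin_glb_lt; lra).
  assert (Hm1 := Rmin_l al b). assert (Hm2 := Rmin_r al b).
  assert (Hyy := Hy y). simpl in Hyy. unfold R_dist in Hyy.
  assert (Hd : Rabs (y - b) < al) by (unfold y; rewrite Rabs_left1; lra).
  assert (Hne : b <> y) by (unfold y; lra). specialize (Hyy (conj (conj I Hne) Hd)). apply Rabs_lt_between in Hyy.
  assert (Ey := Hlb y ltac:(unfold y in *; split; lra)). simpl in Ey. unfold y in Ey. lra.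
Qed.
Lemma foc F f v bs : 0 <= v <= 1 -> is_bstar v F bs -> bs < 1 ->
  deriv01 F bs (f bs) -> 0 < f bs -> v <= bs + F bs / f bs.
Proof.
  intros Hv [Hbs [Hmax _]] Hb1 Hd Hf.
  apply Rnot_lt_le. intro Hlt.
  set (A := f bs * (v - bs) - F bs).
  assert (HA : 0 < A).
  { unfold A. assert (F bs / f bs * f bs = F bs) by (field; lra).
    assert (0 < (v - bs - F bs / f bs) * f bs) by (apply Rmult_lt_0_compat; lra). nra. }
  set (e := A / 4).
  destruct (d01_b F bs (f bs) e Hd ltac:(unfold e; lra)) as [dl [Hdl Hy]].
  set (m := Rmin (Rmin dl (1 - bs)) (Rmin 1 (A / (2 * f bs)))).
  assert (Hm : 0 < m).
  { unfold m. apply Rmin_glb_lt; apply Rmin_glb_lt; try lra.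
    apply Rdiv_lt_0_compat; lra. }
  assert (Hm1 : m <= dl) by (unfold m; eapply Rle_trans; [apply Rmin_l|apply Rmin_l]).
  assert (Hm2 : m <= 1 - bs) by (unfold m; eapply Rle_trans; [apply Rmin_l|apply Rmin_r]).
  assert (Hm3 : m <= 1) by (unfold m; eapply Rle_trans; [apply Rmin_r|apply Rmin_l]).
  assert (Hm4 : m <= A / (2 * f bs)) by (unfold m; eapply Rle_trans; [apply Rmin_r|apply Rmin_r]).
  set (h := m / 2).
  assert (Hh : 0 < h) by (unfold h; lra).
  assert (Hyy := Hy (bs + h) ltac:(unfold h; lra)
     ltac:(replace (bs + h - bs) with h by ring; rewrite Rabs_right; unfold h; lra)).
  replace (bs + h - bs) with h in Hyy by ring. rewrite Rabs_right in Hyy by lra.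
  set (r := F (bs + h) - F bs - f bs * h).
  assert (Hr : Rabs r <= e * h) by (apply Rabs_le_between; unfold r; lra).
  assert (Hc : Rabs ((v - bs - h) * r) <= 2 * (e * h)).
  { rewrite Rabs_mult. apply Rmult_le_compat; try apply Rabs_pos; auto.
    apply Rabs_le_between. unfold h; lra. }
  apply Rabs_le_between in Hc.
  assert (Hfh : f bs * h < A / 2).
  { assert (f bs * h <= f bs * (A / (2 * f bs) / 2)) by (apply Rmult_le_compat_l; unfold h; lra).
    assert (f bs * (A / (2 * f bs) / 2) = A / 4) by (field; lra). lra. }
  assert (Hfh2 : f bs * h * h < A / 2 * h) by (apply Rmult_lt_compat_r; lra).
  assert (HU := Hmax (bs + h) ltac:(unfold h; lra)).
  unfold U in HU.
  assert (Eq : (v - (bs + h)) * F (bs + h) - (v - bs) * F bs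
     = h * A + (v - bs - h) * r - f bs * h * h) by (unfold A, r; ring).
  unfold e in Hc. lra.
Qed.

Lemma foc2 F f v bs : 0 <= v <= 1 -> is_bstar v F bs -> 0 < bs ->
  deriv01 F bs (f bs) -> 0 < f bs -> bs + F bs / f bs <= v.
Proof.
  intros Hv [Hbs [Hmax _]] Hb1 Hd Hf.
  apply Rnot_lt_le. intro Hlt.
  set (A := F bs - f bs * (v - bs)).
  assert (HA : 0 < A).
  { unfold A. assert (F bs / f bs * f bs = F bs) by (field; lra).
    assert (0 < (bs + F bs / f bs - v) * f bs) by (apply Rmult_lt_0_compat; lra). nra. }
  set (e := A / 4).
  destruct (d01_b F bs (f bs) e Hd ltac:(unfold e; lra)) as [dl [Hdl Hy]].
  set (m := Rmin (Rmin dl bs) (Rmin 1 (A / (2 * f bs)))).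
  assert (Hm : 0 < m).
  { unfold m. apply Rmin_glb_lt; apply Rmin_glb_lt; try lra.
    apply Rdiv_lt_0_compat; lra. }
  assert (Hm1 : m <= dl) by (unfold m; eapply Rle_trans; [apply Rmin_l|apply Rmin_l]).
  assert (Hm2 : m <= bs) by (unfold m; eapply Rle_trans; [apply Rmin_l|apply Rmin_r]).
  assert (Hm3 : m <= 1) by (unfold m; eapply Rle_trans; [apply Rmin_r|apply Rmin_l]).
  assert (Hm4 : m <= A / (2 * f bs)) by (unfold m; eapply Rle_trans; [apply Rmin_r|apply Rmin_r]).
  set (h := m / 2).
  assert (Hh : 0 < h) by (unfold h; lra).
  assert (Hyy := Hy (bs - h) ltac:(unfold h; lra)
     ltac:(replace (bs - h - bs) with (- h) by ring; rewrite Rabs_Ropp, Rabs_right; unfold h; lra)).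
  replace (bs - h - bs) with (- h) in Hyy by ring. rewrite Rabs_Ropp, Rabs_right in Hyy by lra.
  set (r := F (bs - h) - F bs + f bs * h).
  assert (Hr : Rabs r <= e * h) by (apply Rabs_le_between; unfold r; lra).
  assert (Hc : Rabs ((v - bs + h) * r) <= 2 * (e * h)).
  { rewrite Rabs_mult. apply Rmult_le_compat; try apply Rabs_pos; auto.
    apply Rabs_le_between. unfold h; lra. }
  apply Rabs_le_between in Hc.
  assert (Hfh : f bs * h < A / 2).
  { assert (f bs * h <= f bs * (A / (2 * f bs) / 2)) by (apply Rmult_le_compat_l; unfold h; lra).
    assert (f bs * (A / (2 * f bs) / 2) = A / 4) by (field; lra). lra. }
  assert (Hfh2 : f bs * h * h < A / 2 * h) by (apply Rmult_lt_compat_r; lra).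
  assert (HU := Hmax (bs - h) ltac:(unfold h; lra)).
  unfold U in HU.
  assert (Eq : (v - (bs - h)) * F (bs - h) - (v - bs) * F bs
     = h * A + (v - bs + h) * r - f bs * h * h) by (unfold A, r; ring).
  unfold e in Hc. lra.
Qed.

Lemma g_deriv : forall (F f : R -> R) v bs K x, 0 < x < 1 -> deriv01 F x (f x) -> f x <> 0 ->
  is_derive (fun y => U v F bs - U v F y - K * (F y - F bs)^2) x
    (f x * (phi F f x - v - K * (2 * (F x - F bs)))).
Proof.
  intros F f v bs K x Hx Hd Hf.
  assert (HD := d01_is_derive F x (f x) Hx Hd).
  unfold U. auto_derive.
  - split; [exists (f x); exact HD | split; [exists (f x); exact HD | exact I]].
  - replace (Derive (fun x0 : R => F x0) x) with (f x) by (symmetry; apply (is_derive_unique F x (f x) HD)). unfold phi. field. auto.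
Qed.
Lemma g_cont : forall (F : R -> R) v bs K x, (forall x, continuity_pt F x) ->
  continuity_pt (fun y => U v F bs - U v F y - K * (F y - F bs)^2) x.
Proof.
  intros F v bs K x Hc. unfold U.
  apply continuity_pt_filterlim.
  apply (continuous_minus (fun y => (v - bs) * F bs - (v - y) * F y) (fun y => K * (F y - F bs)^2)).
  apply (continuous_minus (fun y => (v - bs) * F bs) (fun y => (v - y) * F y)).
  apply continuous_const.
  apply (continuous_mult (fun y => v - y) F).
  apply (continuous_minus (fun y => v) (fun y => y)). apply continuous_const. apply continuous_id.
  apply continuity_pt_filterlim; auto.
  apply (continuous_mult (fun y => K) (fun y => (F y - F bs)^2)). apply continuous_const.
  simpl. apply (continuous_mult (fun y => F y - F bs) (fun y => (F y - F bs) * 1)).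
  apply (continuous_minus F (fun y => F bs)). apply continuity_pt_filterlim; auto. apply continuous_const.
  apply (continuous_mult (fun y => F y - F bs) (fun y => 1)).
  apply (continuous_minus F (fun y => F bs)). apply continuity_pt_filterlim; auto. apply continuous_const.
  apply continuous_const.
Qed.

Theorem lemma6 (F f : R -> R) (v bs Delta cf Cf lam : R) :
  cont_strict_cdf01 F ->
  0 <= v <= 1 ->
  is_bstar v F bs ->
  0 < Delta -> 0 < cf -> cf < Cf -> 0 < lam ->
  assumption2 v F f bs Delta cf Cf lam ->
  forall q : R,
    F bs <= q <= F bs + Cf * Delta ->
    q <= 1 ->
    bs <= Finv F q <= bs + Delta ->
    W v F (F bs) - W v F q <= lam / cf * (F bs - q) ^ 2.
Proof.
  intros HF Hv Hbst HD Hcf HcC Hlam [HA1 HA2] q [Hq1 Hq2] Hq Hb.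
  pose proof HF as [H0 [H1 [Hc Hm]]].
  pose proof Hbst as [Hbs [Hmax _]].
  assert (Hmono : forall x y, 0 <= x -> x <= y -> y <= 1 -> F x <= F y).
  { intros x y Hx Hxy Hy. destruct (Req_dec x y) as [->|]; [lra|].
    left; apply Hm; lra. }
  assert (HFbs0 : 0 <= F bs) by (rewrite <- (H0 0) by lra; apply Hmono; lra).
  assert (HFbs1 : F bs <= 1) by (rewrite <- (H1 1) by lra; apply Hmono; lra).
  unfold W. set (b := Finv F q) in *.
  assert (Hbr := Finv_range F q HF Hq). fold b in Hbr.
  assert (HFb := Finv_le F q HF ltac:(lra) Hq). fold b in HFb.
  assert (HW : U v F (Finv F (F bs)) <= U v F bs)
    by (apply Hmax; apply Finv_range; auto).
  assert (HFbb : F bs <= F b) by (apply Hmono; lra).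
  set (K := lam / cf).
  assert (HK : 0 < K) by (unfold K; apply Rdiv_lt_0_compat; lra).
  assert (Hsq : (F b - F bs) ^ 2 <= (F bs - q) ^ 2) by nra.
  assert (Key : U v F bs - U v F b <= K * (F b - F bs) ^ 2).
  2: { assert (K * (F b - F bs) ^ 2 <= K * (F bs - q) ^ 2) by (apply Rmult_le_compat_l; lra).
       unfold K in *. lra. }
  destruct (Req_dec bs b) as [Heq|Hlt].
  { rewrite <- Heq. assert (0 <= K * (F bs - F bs) ^ 2) by (apply Rmult_le_pos; [lra| apply pow2_ge_0]). lra. }
  assert (Hbsb : bs < b) by lra.
  assert (Win : forall x, bs <= x <= b -> deriv01 F x (f x) /\ cf < f x < Cf)
    by (intros x Hx; apply HA1; lra).
  assert (Hfoc : phi F f bs <= v).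
  { destruct (Win bs ltac:(lra)) as [Hd Hf].
    destruct (Req_dec bs 0) as [Hb0|Hb0].
    - unfold phi. rewrite Hb0, (H0 0) by lra. unfold Rdiv. rewrite Rmult_0_l. lra.
    - apply (foc2 F f v bs Hv Hbst ltac:(lra) Hd ltac:(lra)). }
  assert (Hphi : forall x, bs <= x <= b -> phi F f x - phi F f bs <= lam * (x - bs)).
  { intros x Hx. apply (mono_up (phi F f) lam bs x); try lra.
    intros y Hy. apply HA2; lra. }
  assert (HFl : forall x, bs <= x <= b -> cf * (x - bs) <= F x - F bs).
  { intros x Hx.
    assert (H := mono_up (fun y => - F y) (- cf) bs x ltac:(lra) ltac:(lra) ltac:(lra)).
    cut ((fun y => - F y) x - (fun y => - F y) bs <= - cf * (x - bs)). { simpl. lra. }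
    apply H. intros y Hy. destruct (Win y ltac:(lra)) as [Hd Hf].
    exists (- f y). split; [|lra].
    intros eps He. destruct (Hd eps He) as [dl [Hdl Hz]]. exists dl; split; auto.
    intros z Hz1 Hz2. specialize (Hz z Hz1 Hz2).
    replace (- F z - - F y - - f y * (z - y)) with (- (F z - F y - f y * (z - y))) by ring.
    rewrite Rabs_Ropp; auto. }
  set (g := fun y => U v F bs - U v F y - K * (F y - F bs)^2).
  set (dg := fun x => f x * (phi F f x - v - K * (2 * (F x - F bs)))).
  destruct (MVT_gen g bs b dg) as [c [Hc1 Hc2]].
  { intros x Hx. rewrite Rmin_left in Hx by lra. rewrite Rmax_right in Hx by lra.
    destruct (Win x ltac:(lra)) as [Hd Hf].
    apply g_deriv; auto; lra. }
  { intros x _. apply g_cont; auto. }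
  rewrite Rmin_left in Hc1 by lra. rewrite Rmax_right in Hc1 by lra.
  assert (Hdg : dg c <= 0).
  { unfold dg. destruct (Win c Hc1) as [_ Hf].
    assert (H1' := Hphi c Hc1). assert (H2' := HFl c Hc1).
    assert (K * (2 * (F c - F bs)) >= K * (2 * (cf * (c - bs)))) by (apply Rle_ge, Rmult_le_compat_l; lra).
    assert (K * (2 * (cf * (c - bs))) = 2 * (lam * (c - bs))) by (unfold K; field; lra).
    assert (Hlp : 0 <= lam * (c - bs)) by (apply Rmult_le_pos; lra). assert (phi F f c - v - K * (2 * (F c - F bs)) <= 0) by (clearbody K; clear -H H2 H1' Hfoc Hlp; lra).
    nra. }
  assert (g bs = 0) by (unfold g; ring).
  assert (g b <= 0) by nra.
  unfold g in *. lra.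
Qed.
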